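(* Let $\mathbb{M}$ be a monster model of $T_{f,ab}$. The group $(\mathbb{M},+)$ has no Kim-generic elements over $\langle \emptyset \rangle$: for every $a\in \mathbb{M}$ there is $b$ such that $a$ is algebraically independent from $b$ over $\langle \emptyset \rangle$ (that is, $\langle a\rangle \cap \langle b\rangle = \langle\emptyset\rangle$), while $a+b$ is not algebraically independent from $b$ over $\langle \emptyset \rangle$. (One may take $b$ with $\langle a\rangle\cap\langle b\rangle=\langle\emptyset\rangle$ and with $f$ equal to $0$ everywhere on $\langle a,b\rangle\setminus\langle a\rangle$ except $f(a+b)=b$.)
   Context: $T_{f,ab}$ is the model completion of the theory of abelian groups with a generic unary function $f$ satisfying $f(0)=0$, in the language $L=\{+,0,f\}$; it is NSOP$_1$ with existence and has quantifier elimination. In a monster model $\mathbb{M}$ of $T_{f,ab}$, the algebraic closure of a set is the substructure it generates (denoted $\langle\cdot\rangle$), and Kim-forking independence coincides with algebraic independence ($A$ is algebraically independent from $B$ over $C$ iff $\mathrm{acl}(AC)\cap\mathrm{acl}(BC)=\mathrm{acl}(C)$). For a group $(G,\cdot)$ definable over $E$ in a model of an NSOP$_1$ theory with existence and $E\subseteq B$, an element $a\in G$ is Kim-generic in $G$ over $B$ if $a\cdot b$ is Kim-independent from $b$ over $B$ for every $b\in G$ such that $a$ is Kim-independent from $b$ over $B$. *)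

(* Defs.v *)
From HB Require Import structures.
From mathcomp Require Import all_boot all_order all_algebra.
Set Implicit Arguments. Unset Strict Implicit. Unset Printing Implicit Defensive.
Import GRing.Theory.
Local Open Scope ring_scope.

Inductive term : Type :=
| tVar : nat -> term
| tZero : term
| tAdd : term -> term -> term
| tOpp : term -> term
| tF : term -> term.

Fixpoint teval (G : zmodType) (f : G -> G) (s : seq G) (t : term) : G :=
  match t with
  | tVar i => nth 0 s i
  | tZero => 0
  | tAdd t1 t2 => teval f s t1 + teval f s t2
  | tOpp t1 => - teval f s t1
  | tF t1 => f (teval f s t1)
  end.

Definition Lembedding (G H : zmodType) (f : G -> G) (g : H -> H) (h : G -> H) :=
  [/\ injective h, h 0 = 0, {morph h : x y / x + y}, {morph h : x / - x}
    & forall x, h (f x) = g (h x)].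

(* "Monster model" of T_{f,ab}: (M, f) is an abelian group with f 0 = 0 such
   that for every extension (N, g) of it (a model of the base theory of abelian
   groups with a unary function fixing 0), every finite tuple v of N has
   a realization w in M of its quantifier-free type over any finite set p of
   parameters from M.  This is exactly "existentially closed (= model of the
   model completion T_{f,ab}) and omega-saturated". *)
Definition monster_fab (M : zmodType) (f : M -> M) : Prop :=
  f 0 = 0 /\
  forall (N : zmodType) (g : N -> N) (h : M -> N),
    g 0 = 0 -> Lembedding f g h ->
    forall (p : seq M) (v : seq N),
      exists w : seq M, size w = size v /\
        forall t1 t2 : term,
          (teval g (map h p ++ v) t1 = teval g (map h p ++ v) t2) <->
          (teval f (p ++ w) t1 = teval f (p ++ w) t2).

(* The substructure <X> generated by X (= acl(X) in T_{f,ab}). *)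
Definition gen (M : zmodType) (f : M -> M) (X : M -> Prop) : M -> Prop :=
  fun x => exists (s : seq M) (t : term),
    (forall i, (i < size s)%N -> X (nth 0 s i)) /\ teval f s t = x.

Definition psetU (M : Type) (A B : M -> Prop) : M -> Prop := fun x => A x \/ B x.
Definition pset1 (M : Type) (a : M) : M -> Prop := fun x => x = a.
Definition set_empty (M : Type) : M -> Prop := fun _ => False.

Definition alg_indep (M : zmodType) (f : M -> M) (A B C : M -> Prop) : Prop :=
  forall x, (gen f (psetU A C) x /\ gen f (psetU B C) x) <-> gen f C x.

(* Main.v *)
Require Import Defs.
From mathcomp Require Import all_boot all_order all_algebra.
Local Open Scope ring_scope.
Import GRing.Theory.

Fixpoint onlyv (P : pred nat) (t : term) : bool :=
  match t with
  | tVar i => P i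
  | tZero => true
  | tAdd t1 t2 => onlyv P t1 && onlyv P t2
  | tOpp t1 => onlyv P t1
  | tF t1 => onlyv P t1
  end.

Fixpoint subst (s : nat -> term) (t : term) : term :=
  match t with
  | tVar i => s i
  | tZero => tZero
  | tAdd t1 t2 => tAdd (subst s t1) (subst s t2)
  | tOpp t1 => tOpp (subst s t1)
  | tF t1 => tF (subst s t1)
  end.

Lemma teval_subst (M : zmodType) (f : M -> M) (e s : seq M) (sg : nat -> term) t :
  (forall i, nth 0 s i = teval f e (sg i)) ->
  teval f e (subst sg t) = teval f s t.
Proof.
move=> H; elim: t => [i||t1 IH1 t2 IH2|t1 IH1|t1 IH1] /=; rewrite ?IH1 ?IH2 //.
Qed.

Lemma onlyv_subst P sg t : (forall i, onlyv P (sg i)) -> onlyv P (subst sg t).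
Proof.
move=> H; elim: t => [i||t1 IH1 t2 IH2|t1 IH1|t1 IH1] //=; by rewrite ?IH1 ?IH2.
Qed.

Lemma gen_sub (M : zmodType) (f : M -> M) (e : seq M) (P : pred nat) X x :
  gen f X x -> (forall y, X y -> exists u, onlyv P u /\ y = teval f e u) ->
  exists t, onlyv P t /\ x = teval f e t.
Proof.
move=> [s [t [Hs <-]]] HX.
have [us [Hsz Hus]] : exists us : seq term, size us = size s /\
   forall i, (i < size s)%N -> onlyv P (nth tZero us i) /\ nth 0 s i = teval f e (nth tZero us i).
  elim: s Hs => [|y s IH] Hs; first by exists [::].
  have [|us [Hsz Hus]] := IH.
    by move=> i Hi; apply: (Hs i.+1).
  have [u [Hu Hy]] := HX y (Hs 0%N isT).
  exists (u :: us); split; first by rewrite /= Hsz.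
  by case=> [|i] //= Hi; apply: Hus.
exists (subst (fun i => nth tZero us i) t); split.
  apply: onlyv_subst => i; case: (ltnP i (size s)) => Hi; first by case: (Hus i Hi).
  by rewrite nth_default // Hsz.
rewrite (@teval_subst _ _ _ s) // => i.
case: (ltnP i (size s)) => Hi; first by case: (Hus i Hi).
by rewrite !nth_default // Hsz.
Qed.

Theorem mainTheorem2 (M : zmodType) (f : M -> M) :
  monster_fab f ->
  forall a : M, exists b : M,
    alg_indep f (pset1 a) (pset1 b) (gen f (@set_empty M)) /\
    ~ alg_indep f (pset1 (a + b)) (pset1 b) (gen f (@set_empty M)).
Proof.
move=> [f0 Hmon] a.
pose N := (M * int)%type.
pose h := fun m : M => ((m, 0) : N).
pose g := fun x : N => if x.2 == 0 then ((f x.1, 0) : N)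
                       else if x == (a, 1) then ((0, 1) : N) else 0.
have g0 : g 0 = 0.
  by rewrite /g (_ : (0 : N) = (0, 0)) //= f0.
have Hemb : Lembedding f g h.
  split.
  - by move=> x y [].
  - by [].
  - by move=> x y; rewrite /h; congr (_, _).
  - by move=> x; rewrite /h; congr (_, _).
  - by move=> x; rewrite /g /h /=.
have [w [Hw HT]] := Hmon N g h g0 Hemb [:: a] [:: ((0, 1) : N)].
case: w Hw HT => [|b [|]] // _ HT.
simpl in HT.
set E := [:: h a; ((0, 1) : N)] in HT.
have HA : forall t, onlyv (pred1 0%N) t -> (teval g E t).2 = 0.
  elim=> [i||t1 IH1 t2 IH2|t1 IH1|t1 IH1] /=.
  - by move/eqP=> ->.
  - by [].
  - by case/andP=> /IH1 -> /IH2 ->; rewrite addr0.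
  - by move/IH1 ->; rewrite oppr0.
  - by move/IH1; rewrite /g => ->; rewrite eqxx.
have HB : forall t, onlyv (pred1 1%N) t -> (teval g E t).1 = 0.
  elim=> [i||t1 IH1 t2 IH2|t1 IH1|t1 IH1] /=.
  - by move/eqP=> ->.
  - by [].
  - by case/andP=> /IH1 -> /IH2 ->; rewrite addr0.
  - by move/IH1 ->; rewrite oppr0.
  - move/IH1; rewrite /g => H1.
    case: eqP => _; first by rewrite /= H1 f0.
    by case: eqP.
have Hfab : f (a + b) = b.
  have := (HT (tF (tAdd (tVar 0) (tVar 1))) (tVar 1)).1; apply.
  rewrite /= /g /= (_ : h a + ((0, 1) : N) = (a, 1)) ?eqxx //.
  by apply: (congr2 pair); rewrite /= ?addr0 ?add0r.
have Hemp : forall (e : seq M) P y, gen f (@set_empty M) y ->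
    exists u, onlyv P u /\ y = teval f e u.
  by move=> e P y Hy; apply: (@gen_sub M f e P _ _ Hy) => z [].
have Hmono : forall (A : M -> Prop) x, gen f (gen f (@set_empty M)) x ->
    gen f (psetU A (gen f (@set_empty M))) x.
  move=> A x [s [t [Hs Ht]]]; exists s, t; split => // i Hi; right; exact: Hs.
exists b; split.
  move=> x; split; last by move=> H; split; apply: Hmono.
  case=> H1 H2.
  have [t1' [O1' Ex]] : exists t, onlyv (pred1 0%N) t /\ x = teval f [:: a; b] t.
    apply: (@gen_sub M f [:: a; b] (pred1 0%N) _ _ H1).
    by move=> y [->|Hy]; [exists (tVar 0) | exact: Hemp].
  have [t2' [O2' E2']] : exists t, onlyv (pred1 1%N) t /\ x = teval f [:: a; b] t.
    apply: (@gen_sub M f [:: a; b] (pred1 1%N) _ _ H2).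
    by move=> y [->|Hy]; [exists (tVar 1) | exact: Hemp].
  rewrite Ex in E2' *.
  have Hn : teval g E t1' = teval g E tZero.
    have := (HT t1' t2').2 E2'; move=> Heq.
    have := HA _ O1'; have := HB _ O2'; rewrite -Heq.
    by case: (teval g E t1') => u v /= -> ->.
  have -> := (HT t1' tZero).1 Hn.
  by exists [::], tZero.
move=> Hind.
have [Hb _] := Hind b.
have [t [Ot Et]] : exists t, onlyv (pred1 0%N) t /\ b = teval f [:: a; b] t.
  apply: (@gen_sub M f [:: a; b] (pred1 0%N) _ _ (Hb _)); last first.
    by move=> y Hy; apply: Hemp.
  split; last by exists [:: b], (tVar 0); split=> // -[] // _; left.
  by exists [:: a + b], (tF (tVar 0)); split=> // -[] // _; left.
have := (HT (tVar 1) t).2 Et.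
move=> Hn; have := HA _ Ot; rewrite -Hn /=.
done.
Qed.
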